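(* Let $M$ be a finitely generated monoid and let $X$ be a finite generating set of $M \times M$. Then the class $\mathbb{F}(M)$ is closed under finite intersection if and only if there exists an $M$-automaton accepting the identity language $W_X(M \times M)$.
   Context: For a monoid $M$ with identity $1$ and a finite alphabet $\Sigma$, an $M$-automaton over $\Sigma$ is a finite directed graph whose edges are labelled by elements of $M \times (\Sigma \cup \{\epsilon\})$ (inside the monoid $M \times \Sigma^*$), with an initial vertex and a set of terminal vertices; a word $w \in \Sigma^*$ is accepted if some path from the initial vertex to a terminal vertex has label (product of edge labels) equal to $(1,w)$. $\mathbb{F}(M)$ denotes the family of all languages (over all finite alphabets) accepted by $M$-automata. If a monoid $N$ is generated by a finite set $X$, the identity language $W_X(N) \subseteq X^*$ is the set of all words over $X$ representing the identity of $N$. Closure under finite intersection means: if $L_1, L_2 \in \mathbb{F}(M)$ are languages over the same alphabet then $L_1 \cap L_2 \in \mathbb{F}(M)$. *)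

(* Defs.v *)
From mathcomp Require Import all_boot.
From Stdlib Require List.
Set Implicit Arguments. Unset Strict Implicit. Unset Printing Implicit Defensive.

Record monoidT := {
  mcarrier :> Type;
  mmul : mcarrier -> mcarrier -> mcarrier;
  mone : mcarrier;
  mmulA : forall x y z, mmul x (mmul y z) = mmul (mmul x y) z;
  mmul1l : forall x, mmul mone x = x;
  mmul1r : forall x, mmul x mone = x }.

Definition mprod (M : monoidT) (s : seq M) : M := foldr (@mmul M) (@mone M) s.

Definition finitely_generated (M : monoidT) : Prop :=
  exists gens : seq M, forall m : M,
    exists w : seq M, (forall g, List.In g w -> List.In g gens) /\ mprod w = m.

Definition mulMM (M : monoidT) (p q : M * M) : M * M :=
  (mmul p.1 q.1, mmul p.2 q.2).
Definition prodMM (M : monoidT) (s : seq (M * M)) : M * M :=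
  foldr (@mulMM M) (mone M, mone M) s.

(* An M-automaton over the finite alphabet S: a finite directed (multi)graph
   with edges labelled by M x (S u {eps}), initial vertex and terminal set. *)
Record automaton (M : monoidT) (S : finType) := {
  astate : finType;
  aedges : seq (astate * M * option S * astate);
  ainit : astate;
  afinal : pred astate }.

Definition edge_src M S (A : automaton M S) (e : astate A * M * option S * astate A) := e.1.1.1.
Definition edge_mon M S (A : automaton M S) (e : astate A * M * option S * astate A) := e.1.1.2.
Definition edge_let M S (A : automaton M S) (e : astate A * M * option S * astate A) := e.1.2.
Definition edge_tgt M S (A : automaton M S) (e : astate A * M * option S * astate A) := e.2.

Fixpoint is_path M S (A : automaton M S) (q : astate A)
  (p : seq (astate A * M * option S * astate A)) (q' : astate A) : Prop :=
  match p with
  | [::] => q = q'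
  | e :: p' => List.In e (aedges A) /\ edge_src e = q /\ is_path (edge_tgt e) p' q'
  end.

Definition accepts M S (A : automaton M S) (w : seq S) : Prop :=
  exists p q', @is_path M S A (ainit A) p q' /\ @afinal M S A q' /\
    mprod (map (@edge_mon M S A) p) = mone M /\
    pmap id (map (@edge_let M S A) p) = w.

Definition language (S : finType) := seq S -> Prop.

Definition in_FM (M : monoidT) (S : finType) (L : language S) : Prop :=
  exists A : automaton M S, forall w, L w <-> accepts A w.

Definition FM_closed_under_intersection (M : monoidT) : Prop :=
  forall (S : finType) (L1 L2 : language S),
    in_FM M L1 -> in_FM M L2 -> in_FM M (fun w => L1 w /\ L2 w).

Definition generates_MM (M : monoidT) (X : finType) (x : X -> M * M) : Prop :=
  injective x /\ forall p : M * M, exists w : seq X, prodMM (map x w) = p.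

Definition identity_language (M : monoidT) (X : finType) (x : X -> M * M) : language X :=
  fun w => prodMM (map x w) = (mone M, mone M).

(* Main.v *)
Require Import Defs.
From mathcomp Require Import all_boot.
From Stdlib Require List.
From Stdlib Require Import IndefiniteDescription.
Set Implicit Arguments. Unset Strict Implicit. Unset Printing Implicit Defensive.

Definition lets M S (A : automaton M S) (p : seq (astate A * M * option S * astate A)) :=
  pmap id (map (@edge_let M S A) p).
Definition lab M S (A : automaton M S) (p : seq (astate A * M * option S * astate A)) :=
  mprod (map (@edge_mon M S A) p).

Lemma mprod_cat (M : monoidT) (s t : seq M) : mprod (s ++ t) = mmul (mprod s) (mprod t).
Proof.
elim: s => [|a s IH] /=; first by rewrite mmul1l.
by rewrite IH mmulA.
Qed.

Lemma lab_cons M S (A : automaton M S) (e : astate A * M * option S * astate A) p : lab (e :: p) = mmul (edge_mon e) (lab p).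
Proof. by []. Qed.
Lemma lab_nil M S (A : automaton M S) : @lab M S A [::] = mone M.
Proof. by []. Qed.
Lemma lab_cat M S (A : automaton M S) (p1 p2 : seq (astate A * M * option S * astate A)) : @lab M S A (p1 ++ p2) = mmul (lab p1) (lab p2).
Proof. by rewrite /lab map_cat mprod_cat. Qed.
Lemma lets_cat M S (A : automaton M S) (p1 p2 : seq (astate A * M * option S * astate A)) : @lets M S A (p1 ++ p2) = lets p1 ++ lets p2.
Proof. by rewrite /lets map_cat pmap_cat. Qed.
Lemma lets_cons M S (A : automaton M S) (e : astate A * M * option S * astate A) p :
  @lets M S A (e :: p) = if edge_let e is Some a then a :: lets p else lets p.
Proof. by rewrite /lets /=; case: (edge_let e). Qed.

Lemma is_path_cat M S (A : automaton M S) q (p1 : seq (astate A * M * option S * astate A)) q' p2 q'' :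
  is_path q p1 q' -> is_path q' p2 q'' -> @is_path M S A q (p1 ++ p2) q''.
Proof.
elim: p1 q => [|e p1 IH] q /=; first by move=> ->.
by move=> [H1 [H2 H3]] H4; split; [|split; [|apply: IH]].
Qed.

Lemma In_mem (T : eqType) (x : T) (s : seq T) : x \in s -> List.In x s.
Proof.
elim: s => [|a s IH] //=; rewrite in_cons => /orP [/eqP ->|H]; [by left|right; exact: IH].
Qed.

Lemma In_nth (T : Type) (x0 : T) (s : seq T) i : i < size s -> List.In (nth x0 s i) s.
Proof.
elim: s i => [|a s IH] [|i] //= H; [left|right; exact: IH] => //.
Qed.

Lemma In_index (T : Type) (e : T) (s : seq T) :
  List.In e s -> exists i : 'I_(size s), tnth (in_tuple s) i = e.
Proof.
move=> H.
have [n [Hn He]] : exists n, n < size s /\ nth e s n = e.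
  elim: s H => [|a s IH] //= [->|H]; first by exists 0.
  have [n [Hn He]] := IH H; by exists n.+1.
exists (Ordinal Hn); by rewrite (tnth_nth e).
Qed.

Lemma In_tnth (T : Type) (s : seq T) (i : 'I_(size s)) : List.In (tnth (in_tuple s) i) s.
Proof. rewrite (tnth_nth (tnth (in_tuple s) i)); exact: In_nth. Qed.

Lemma mulMM_A (M : monoidT) (x y z : M * M) : mulMM x (mulMM y z) = mulMM (mulMM x y) z.
Proof. by case: x y z => [a b] [c d] [e f]; rewrite /mulMM /= !mmulA. Qed.
Lemma mulMM_1l (M : monoidT) (x : M * M) : mulMM (mone M, mone M) x = x.
Proof. by case: x => a b; rewrite /mulMM /= !mmul1l. Qed.
Lemma mulMM_1r (M : monoidT) (x : M * M) : mulMM x (mone M, mone M) = x.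
Proof. by case: x => a b; rewrite /mulMM /= !mmul1r. Qed.

Definition MM (M : monoidT) : monoidT :=
  @Build_monoidT (M * M) (@mulMM M) (mone M, mone M) (@mulMM_A M) (@mulMM_1l M) (@mulMM_1r M).

Lemma prodMM_split (M : monoidT) (s : seq (M * M)) :
  prodMM s = (mprod (map fst s), mprod (map snd s)).
Proof. by elim: s => [|[a b] s IH] //=; rewrite IH. Qed.

Section Prod.
Variables (M : monoidT) (S : finType) (A1 A2 : automaton M S).
Local Notation Q1 := (astate A1).
Local Notation Q2 := (astate A2).

Definition prod_edges : seq ((Q1 * Q2)%type * (MM M) * option S * (Q1 * Q2)%type) :=
  List.flat_map (fun e1 => List.flat_map (fun q2 =>
     if edge_let e1 is None then
       [:: ((edge_src e1, q2), ((edge_mon e1, mone M) : MM M), None, (edge_tgt e1, q2))]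
     else [::]) (enum Q2)) (aedges A1)
  ++ List.flat_map (fun e2 => List.flat_map (fun q1 =>
     if edge_let e2 is None then
       [:: ((q1, edge_src e2), ((mone M, edge_mon e2) : MM M), None, (q1, edge_tgt e2))]
     else [::]) (enum Q1)) (aedges A2)
  ++ List.flat_map (fun e1 => List.flat_map (fun e2 =>
     if (edge_let e1 != None) && (edge_let e1 == edge_let e2) then
       [:: ((edge_src e1, edge_src e2), ((edge_mon e1, edge_mon e2) : MM M), edge_let e1,
            (edge_tgt e1, edge_tgt e2))]
     else [::]) (aedges A2)) (aedges A1).

Definition prodA : automaton (MM M) S :=
  @Build_automaton (MM M) S ((Q1 * Q2)%type : finType) prod_edges (ainit A1, ainit A2)
    (fun q => afinal q.1 && afinal q.2).

Local Notation E1T := (Q1 * M * option S * Q1)%type.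
Local Notation E2T := (Q2 * M * option S * Q2)%type.

Lemma prod_edges_inv e : List.In e prod_edges ->
  (exists (e1 : E1T) q2, List.In e1 (aedges A1) /\ edge_let e1 = None /\
     e = ((edge_src e1, q2), ((edge_mon e1, mone M) : MM M), None, (edge_tgt e1, q2)))
  \/ (exists (e2 : E2T) q1, List.In e2 (aedges A2) /\ edge_let e2 = None /\
     e = ((q1, edge_src e2), ((mone M, edge_mon e2) : MM M), None, (q1, edge_tgt e2)))
  \/ (exists (e1 : E1T) (e2 : E2T), List.In e1 (aedges A1) /\ List.In e2 (aedges A2) /\
     edge_let e1 = edge_let e2 /\
     e = ((edge_src e1, edge_src e2), ((edge_mon e1, edge_mon e2) : MM M), edge_let e1,
            (edge_tgt e1, edge_tgt e2))).
Proof.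
move/List.in_app_iff => [H|/List.in_app_iff [H|H]].
- left; move/List.in_flat_map: H => [e1 [He1 /List.in_flat_map [q2 [_ H]]]].
  exists e1, q2; move: H; case E: (edge_let e1) => [a|] //= [<-|] //.
- right; left; move/List.in_flat_map: H => [e2 [He2 /List.in_flat_map [q1 [_ H]]]].
  exists e2, q1; move: H; case E: (edge_let e2) => [a|] //= [<-|] //.
- right; right; move/List.in_flat_map: H => [e1 [He1 /List.in_flat_map [e2 [He2 H]]]].
  exists e1, e2; move: H; case: ifP => // /andP [_ /eqP E] /= [<-|] //.
Qed.

Lemma prod_sound (p : seq (astate prodA * MM M * option S * astate prodA)) q q' :
  is_path q p q' -> exists (p1 : seq E1T) (p2 : seq E2T),
    is_path q.1 p1 q'.1 /\ is_path q.2 p2 q'.2 /\ lets p1 = lets p /\ lets p2 = lets p /\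
    ((lab p1, lab p2) : MM M) = lab p.
Proof.
elim: p q => [|e p IH] q /=.
  move=> ->; by exists [::], [::].
move=> [Hin [Hsrc Hp]].
have [p1 [p2 [H1 [H2 [L1 [L2 Lab]]]]]] := IH _ Hp.
rewrite lab_cons lets_cons -Lab.
case: (prod_edges_inv Hin) => [[e1 [q2 [He1 [Hl Ee]]]]|[[e2 [q1 [He2 [Hl Ee]]]]|[e1 [e2 [He1 [He2 [Hl Ee]]]]]]];
  subst e; move: Hsrc H1 H2 L1 L2; rewrite /= => <- /= H1 H2 L1 L2.
- exists (e1 :: p1), p2; rewrite lets_cons Hl lab_cons /mulMM /= mmul1l; by do !split.
- exists p1, (e2 :: p2); rewrite lets_cons Hl lab_cons /mulMM /= mmul1l; by do !split.
- exists (e1 :: p1), (e2 :: p2); rewrite !lets_cons -Hl !lab_cons /mulMM /=.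
  case: (edge_let e1) => [a|]; rewrite ?L1 ?L2; by do !split.
Qed.

Lemma in_pe1 (e1 : E1T) q2 : List.In e1 (aedges A1) -> edge_let e1 = None ->
  List.In (((edge_src e1, q2), ((edge_mon e1, mone M) : MM M), None, (edge_tgt e1, q2))) prod_edges.
Proof.
move=> H E; apply/List.in_app_iff; left; apply/List.in_flat_map; exists e1; split=>//.
apply/List.in_flat_map; exists q2; split; [apply: In_mem; exact: mem_enum|]; rewrite E; by left.
Qed.
Lemma in_pe2 (e2 : E2T) q1 : List.In e2 (aedges A2) -> edge_let e2 = None ->
  List.In (((q1, edge_src e2), ((mone M, edge_mon e2) : MM M), None, (q1, edge_tgt e2))) prod_edges.
Proof.
move=> H E; apply/List.in_app_iff; right; apply/List.in_app_iff; left.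
apply/List.in_flat_map; exists e2; split=>//.
apply/List.in_flat_map; exists q1; split; [apply: In_mem; exact: mem_enum|]; rewrite E; by left.
Qed.
Lemma in_pe3 (e1 : E1T) (e2 : E2T) a : List.In e1 (aedges A1) -> List.In e2 (aedges A2) ->
  edge_let e1 = Some a -> edge_let e2 = Some a ->
  List.In (((edge_src e1, edge_src e2), ((edge_mon e1, edge_mon e2) : MM M), Some a,
            (edge_tgt e1, edge_tgt e2))) prod_edges.
Proof.
move=> H1 H2 E1 E2; apply/List.in_app_iff; right; apply/List.in_app_iff; right.
apply/List.in_flat_map; exists e1; split=>//.
apply/List.in_flat_map; exists e2; split=>//; rewrite E1 E2 eqxx /=; by left.
Qed.

Lemma prod_complete (p1 : seq E1T) : forall q1 q1' (p2 : seq E2T) q2 q2',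
  is_path q1 p1 q1' -> is_path q2 p2 q2' -> lets p1 = lets p2 ->
  exists p : seq (astate prodA * MM M * option S * astate prodA),
    is_path ((q1, q2) : astate prodA) p (q1', q2') /\ lets p = lets p1 /\
    lab p = ((lab p1, lab p2) : MM M).
Proof.
elim: p1 => [|e1 p1 IH1] q1 q1' p2 q2 q2' H1.
  elim: p2 q2 => [|e2 p2 IH2] q2.
    move=> /= -> _; exists [::]; move: H1 => /= ->; by do !split.
  move=> /= [He2 [Hs Hp]]; rewrite lets_cons; case E: (edge_let e2) => [a|] // L.
  have [p [Hp' [Lp Lb]]] := IH2 _ Hp L.
  exists (((q1, edge_src e2), ((mone M, edge_mon e2) : MM M), None, (q1, edge_tgt e2)) :: p).
  split; first by split; [exact: in_pe2|split; [rewrite Hs|]].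
  rewrite lets_cons /= Lp; split=> //.
  by rewrite (@lab_cons (MM M) S prodA) Lb /= /mulMM /= lab_cons mmul1l.
move: H1 => /= [He1 [Hs1 Hp1]].
case E1: (edge_let e1) => [a|].
  elim: p2 q2 => [|e2 p2 IH2] q2.
    by rewrite lets_cons E1.
  move=> /= [He2 [Hs2 Hp2]]; case E2: (edge_let e2) => [a'|].
    rewrite !lets_cons E1 E2 => -[Ea L]; subst a'.
    have [p [Hp' [Lp Lb]]] := IH1 _ _ _ _ _ Hp1 Hp2 L.
    exists (((edge_src e1, edge_src e2), ((edge_mon e1, edge_mon e2) : MM M), Some a,
            (edge_tgt e1, edge_tgt e2)) :: p).
    split; first by split; [apply: in_pe3; rewrite ?E1 ?E2|split; [rewrite Hs1 Hs2|]].
    rewrite (@lets_cons (MM M) S prodA) /= Lp; split=> //.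
    by rewrite (@lab_cons (MM M) S prodA) Lb.
  rewrite [lets (e2 :: _)]lets_cons E2 => L.
  have [p [Hp' [Lp Lb]]] := IH2 _ Hp2 L.
  exists (((q1, edge_src e2), ((mone M, edge_mon e2) : MM M), None, (q1, edge_tgt e2)) :: p).
  split; first by split; [exact: in_pe2|split; [rewrite Hs2|]].
  rewrite (@lets_cons (MM M) S prodA) /= Lp; split=> //.
  by rewrite (@lab_cons (MM M) S prodA) Lb /= /mulMM /= [lab (e2 :: _)]lab_cons mmul1l.
move=> H2; rewrite lets_cons E1 => L.
have [p [Hp' [Lp Lb]]] := IH1 _ _ _ _ _ Hp1 H2 L.
exists (((edge_src e1, q2), ((edge_mon e1, mone M) : MM M), None, (edge_tgt e1, q2)) :: p).
split; first by split; [exact: in_pe1|split; [rewrite Hs1|]].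
rewrite (@lets_cons (MM M) S prodA) /= Lp; split=> //.
by rewrite (@lab_cons (MM M) S prodA) Lb /= /mulMM /= lab_cons mmul1l.
Qed.

Lemma prodA_accepts w : accepts prodA w <-> accepts A1 w /\ accepts A2 w.
Proof.
split.
  move=> [p [q' [Hp [Hf [Hl Hw]]]]].
  have [p1 [p2 [H1 [H2 [L1 [L2 Lb]]]]]] := prod_sound Hp.
  move: Hf => /= /andP [F1 F2].
  have : lab p = mone (MM M) by [].
  rewrite -Lb => -[E1 E2].
  split; [exists p1, q'.1|exists p2, q'.2]; (do !split) => //.
  - by rewrite -Hw; exact: L1.
  - by rewrite -Hw; exact: L2.
move=> [[p1 [q1 [H1 [F1 [Lb1 W1]]]]] [p2 [q2 [H2 [F2 [Lb2 W2]]]]]].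
have L : lets p1 = lets p2 by rewrite /lets W1 W2.
have [p [Hp [Lp Lb]]] := prod_complete H1 H2 L.
exists p, (q1, q2); (do !split) => //=.
- by rewrite F1 F2.
- have -> : mprod (map (@edge_mon _ _ prodA) p) = lab p by [].
  rewrite Lb /lab Lb1; move: Lb2; rewrite /lab => ->; by [].
- have -> : pmap id (map (@edge_let _ _ prodA) p) = lets p by [].
  by rewrite Lp.
Qed.
End Prod.

Lemma path_split M S (A : automaton M S) (beta : seq (astate A * M * option S * astate A)) :
  forall b b' s t, is_path b beta b' -> lets beta = s ++ t ->
  exists beta1 beta2 bm, is_path b beta1 bm /\ is_path bm beta2 b' /\
    lets beta1 = s /\ lets beta2 = t /\ lab beta = mmul (lab beta1) (lab beta2).
Proof.
elim: beta => [|e beta IH] b b' s t.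
  move=> /= ->; case: s => [|y s] //= <-.
  by exists [::], [::], b'; rewrite /lab /= mmul1l.
case: s => [|y s].
  move=> Hp L; exists [::], (e :: beta), b; by rewrite /= mmul1l.
move=> /= [Hin [Hs Hp]]; rewrite lets_cons; case E: (edge_let e) => [y'|] L.
  case: L => Ey L.
  have [b1 [b2 [bm [H1 [H2 [L1 [L2 Lb]]]]]]] := IH _ _ _ _ Hp L.
  exists (e :: b1), b2, bm; rewrite lets_cons E L1 Ey lab_cons Lb mmulA; by do !split.
have [b1 [b2 [bm [H1 [H2 [L1 [L2 Lb]]]]]]] := IH _ _ (y :: s) _ Hp L.
exists (e :: b1), b2, bm; rewrite lets_cons E L1 lab_cons Lb mmulA; by do !split.
Qed.

Section Sim.
Variables (M N : monoidT) (X : finType) (x : X -> N)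
  (gen : forall n : N, exists w, mprod (map x w) = n)
  (B : automaton M X) (S : finType) (P : automaton N S).

Local Notation QP := (astate P).
Local Notation QB := (astate B).
Local Notation EP := (aedges P).
Local Notation nP := (size (aedges P)).
Local Notation EPT := (QP * N * option S * QP)%type.
Local Notation EBT := (QB * M * option X * QB)%type.

Definition uw (n : N) : seq X := proj1_sig (constructive_indefinite_description _ (gen n)).
Lemma uwP n : mprod (map x (uw n)) = n.
Proof. exact: proj2_sig (constructive_indefinite_description _ (gen n)). Qed.

Definition ep (i : 'I_nP) : EPT := tnth (in_tuple EP) i.
Definition Wd (i : 'I_nP) := uw (edge_mon (ep i)).
Definition Kb := \max_(i < nP) size (Wd i).
Definition CS : finType := (QP * QB * option 'I_nP * 'I_Kb.+1)%type.
Local Notation CE := (CS * M * option S * CS)%type.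

Definition pend (z : CS) : seq X := if z.1.2 is Some i then drop z.2 (Wd i) else [::].

Lemma pend_step (z : CS) y rest b' :
  pend z = y :: rest -> pend ((z.1.1.1, b', z.1.2, inord z.2.+1) : CS) = rest.
Proof.
case: z => [[[p b] [i|]] k] //=; rewrite /pend /= => H.
have Hk : k < size (Wd i) by rewrite -subn_gt0 -size_drop H.
have HK : size (Wd i) <= Kb by exact: (leq_bigmax i).
rewrite inordK; last by rewrite ltnS; apply: leq_trans HK.
by rewrite (_ : k.+1 = 1 + k) // -drop_drop H drop1.
Qed.

Lemma pend_setB (z : CS) b' : pend ((z.1.1.1, b', z.1.2, z.2) : CS) = pend z.
Proof. by case: z => [[[p b] o] k]. Qed.

Definition C_edges : seq CE :=
  List.flat_map (fun z : CS =>
    List.flat_map (fun eB : EBT =>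
      (if (edge_src eB == z.1.1.2) && (edge_let eB == None) then
         [:: (z, edge_mon eB, None, ((z.1.1.1, edge_tgt eB, z.1.2, z.2) : CS))] else [::])
      ++ (if [&& edge_src eB == z.1.1.2, edge_let eB != None & edge_let eB == ohead (pend z)] then
         [:: (z, edge_mon eB, None, ((z.1.1.1, edge_tgt eB, z.1.2, inord z.2.+1) : CS))] else [::]))
      (aedges B)
    ++ List.flat_map (fun i : 'I_nP =>
      if (pend z == [::]) && (edge_src (ep i) == z.1.1.1) then
        [:: (z, mone M, edge_let (ep i), ((edge_tgt (ep i), z.1.1.2, Some i, ord0) : CS))]
      else [::]) (enum 'I_nP)) (enum CS).

Definition CA : automaton M S :=
  @Build_automaton M S CS C_edges ((ainit P, ainit B, None, ord0) : CS)
    (fun z => [&& afinal z.1.1.1, afinal z.1.1.2 & pend z == [::]]).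

Lemma C_edges_inv (e : CE) : List.In e C_edges ->
  (exists (z : CS) (eB : EBT), List.In eB (aedges B) /\ edge_src eB = z.1.1.2 /\
     edge_let eB = None /\ e = (z, edge_mon eB, None, ((z.1.1.1, edge_tgt eB, z.1.2, z.2) : CS)))
  \/ (exists (z : CS) (eB : EBT) y, List.In eB (aedges B) /\ edge_src eB = z.1.1.2 /\
     edge_let eB = Some y /\ ohead (pend z) = Some y /\
     e = (z, edge_mon eB, None, ((z.1.1.1, edge_tgt eB, z.1.2, inord z.2.+1) : CS)))
  \/ (exists (z : CS) (i : 'I_nP), pend z = [::] /\ edge_src (ep i) = z.1.1.1 /\
     e = (z, mone M, edge_let (ep i), ((edge_tgt (ep i), z.1.1.2, Some i, ord0) : CS))).
Proof.
move/List.in_flat_map => [z [_ /List.in_app_iff [H|H]]].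
  move/List.in_flat_map: H => [eB [HeB /List.in_app_iff [H|H]]].
    left; exists z, eB; move: H; case: ifP => // /andP [/eqP E1 /eqP E2] [<-|] //.
  right; left; move: H; case: ifP => // /and3P [/eqP E1 E2 /eqP E3] [<-|] //.
  case E: (edge_let eB) E2 E3 => [y|] // _ E3.
  by exists z, eB, y.
right; right; move/List.in_flat_map: H => [i [_ H]].
move: H; case: ifP => // /andP [/eqP E1 /eqP E2] [<-|] //.
by exists z, i.
Qed.

Lemma in_ce1 (z : CS) (eB : EBT) : List.In eB (aedges B) -> edge_src eB = z.1.1.2 ->
  edge_let eB = None ->
  List.In ((z, edge_mon eB, None, ((z.1.1.1, edge_tgt eB, z.1.2, z.2) : CS)) : CE) C_edges.
Proof.
move=> H E1 E2; apply/List.in_flat_map; exists z; split; first by apply: In_mem; exact: mem_enum.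
apply/List.in_app_iff; left; apply/List.in_flat_map; exists eB; split=> //.
by apply/List.in_app_iff; left; rewrite E1 E2 !eqxx /=; left.
Qed.

Lemma in_ce2 (z : CS) (eB : EBT) y : List.In eB (aedges B) -> edge_src eB = z.1.1.2 ->
  edge_let eB = Some y -> ohead (pend z) = Some y ->
  List.In ((z, edge_mon eB, None, ((z.1.1.1, edge_tgt eB, z.1.2, inord z.2.+1) : CS)) : CE) C_edges.
Proof.
move=> H E1 E2 E3; apply/List.in_flat_map; exists z; split; first by apply: In_mem; exact: mem_enum.
apply/List.in_app_iff; left; apply/List.in_flat_map; exists eB; split=> //.
by apply/List.in_app_iff; right; rewrite E1 E2 E3 !eqxx /=; left.
Qed.

Lemma in_ce3 (z : CS) (i : 'I_nP) : pend z = [::] -> edge_src (ep i) = z.1.1.1 ->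
  List.In ((z, mone M, edge_let (ep i), ((edge_tgt (ep i), z.1.1.2, Some i, ord0) : CS)) : CE) C_edges.
Proof.
move=> E1 E2; apply/List.in_flat_map; exists z; split; first by apply: In_mem; exact: mem_enum.
apply/List.in_app_iff; right; apply/List.in_flat_map; exists i; split.
  by apply: In_mem; exact: mem_enum.
by rewrite E1 E2 !eqxx /=; left.
Qed.


Lemma sim_sound (pi : seq (astate CA * M * option S * astate CA)) (z z' : CS) :
  @is_path M S CA z pi z' -> pend z' = [::] ->
  exists (rho : seq EPT) (beta : seq EBT) v,
    is_path z.1.1.1 rho z'.1.1.1 /\ is_path z.1.1.2 beta z'.1.1.2 /\
    lets rho = lets pi /\ lab beta = lab pi /\ lets beta = pend z ++ v /\
    mprod (map x v) = lab rho.
Proof.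
move=> Hpi Hz'.
elim: pi z Hpi => [|e pi IH] z /=.
  move=> Ez; subst z; exists [::], [::], [::]; by rewrite Hz'.
move=> [Hin [Hs Hp]].
have [rho [beta [v [H1 [H2 [L1 [Lb [L2 Lv]]]]]]]] := IH _ Hp.
case: (C_edges_inv Hin) =>
  [[z0 [eB [HeB [E1 [E2 Ee]]]]]|[[z0 [eB [y [HeB [E1 [E2 [E3 Ee]]]]]]]|[z0 [i [E1 [E2 Ee]]]]]];
  subst e; move: Hs H1 H2 L1 Lb L2 => /= Hs; rewrite /edge_src /= in Hs; subst z0 => /= H1 H2 L1 Lb L2.
- exists rho, (eB :: beta), v; rewrite pend_setB in L2.
  rewrite (@lets_cons M S CA) /= L1 lets_cons E2 L2 lab_cons Lb; by do !split.
- case Ep: (pend z) E3 => [|y' rest] //= [Ey]; subst y'.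
  have := pend_step (edge_tgt eB) Ep; rewrite /= => Ep'; rewrite Ep' in L2.
  exists rho, (eB :: beta), v.
  rewrite (@lets_cons M S CA) /= L1 lets_cons E2 L2 lab_cons Lb; by do !split.
- exists (ep i :: rho), beta, (Wd i ++ v).
  rewrite /pend /= drop0 in L2.
  rewrite (@lets_cons M S CA) lets_cons /= L1 (@lab_cons M S CA) /= Lb mmul1l E1 L2.
  rewrite map_cat mprod_cat Lv uwP lab_cons.
  do !split => //; exact: In_tnth.
Qed.

Lemma sim_feed (beta : seq EBT) : forall (z : CS) b',
  is_path z.1.1.2 beta b' -> lets beta = pend z ->
  exists (pi : seq (astate CA * M * option S * astate CA)) (z' : CS),
    @is_path M S CA z pi z' /\ z'.1.1.1 = z.1.1.1 /\ z'.1.1.2 = b' /\ pend z' = [::] /\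
    lab pi = lab beta /\ lets pi = [::].
Proof.
elim: beta => [|eB beta IH] z b' /=.
  move=> <- L; exists [::], z; do !split => //; by rewrite -L.
move=> [HeB [Hs Hp]]; rewrite lets_cons; case E: (edge_let eB) => [y|] L.
  have Ep' := pend_step (edge_tgt eB) (esym L).
  have [pi [z' [H1 [E1 [E2 [E3 [Lb Ll]]]]]]] := IH ((z.1.1.1, edge_tgt eB, z.1.2, inord z.2.+1) : CS) b' Hp (esym Ep').
  exists ((z, edge_mon eB, None, ((z.1.1.1, edge_tgt eB, z.1.2, inord z.2.+1) : CS)) :: pi), z'.
  rewrite (@lab_cons M S CA) (@lets_cons M S CA) /= Lb Ll lab_cons.
  do !split => //; apply: (in_ce2 (y := y)) => //; by rewrite -L.
have [pi [z' [H1 [E1 [E2 [E3 [Lb Ll]]]]]]] :=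
  IH ((z.1.1.1, edge_tgt eB, z.1.2, z.2) : CS) b' Hp (etrans L (esym (pend_setB z _))).
exists ((z, edge_mon eB, None, ((z.1.1.1, edge_tgt eB, z.1.2, z.2) : CS)) :: pi), z'.
rewrite (@lab_cons M S CA) (@lets_cons M S CA) /= Lb Ll lab_cons.
do !split => //; exact: in_ce1.
Qed.

Lemma sim_complete (rho : seq EPT) p p' : is_path p rho p' ->
  exists v, mprod (map x v) = lab rho /\
  forall (z : CS) (beta : seq EBT) b', z.1.1.1 = p -> is_path z.1.1.2 beta b' ->
    lets beta = pend z ++ v ->
    exists (pi : seq (astate CA * M * option S * astate CA)) (z' : CS),
      @is_path M S CA z pi z' /\ z'.1.1.1 = p' /\ z'.1.1.2 = b' /\ pend z' = [::] /\
      lab pi = lab beta /\ lets pi = lets rho.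
Proof.
elim: rho p => [|e rho IH] p /=.
  move=> <-; exists [::]; split=> // z beta b' Ez Hb; rewrite cats0 => L.
  have [pi [z' [H1 [E1 [E2 [E3 [Lb Ll]]]]]]] := sim_feed Hb L.
  exists pi, z'; rewrite E1 Ez; by do !split.
move=> [He [Hs Hp]].
have [v [Hv F]] := IH _ Hp.
have [i Ei] := In_index He.
have Ei' : ep i = e by [].
exists (Wd i ++ v); split.
  by rewrite map_cat mprod_cat Hv uwP lab_cons Ei'.
move=> z beta b' Ez Hb L.
have [b1 [b2 [bm [H1 [H2 [L1 [L2 Lb]]]]]]] := path_split Hb L.
have [pi1 [z1 [P1 [Z1 [Z2 [Z3 [Lb1 Ll1]]]]]]] := sim_feed H1 L1.
pose z2 : CS := (edge_tgt (ep i), z1.1.1.2, Some i, ord0).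
have Pz2 : pend z2 = Wd i by rewrite /pend /= drop0.
have G1 : z2.1.1.1 = edge_tgt e by rewrite /z2 /= Ei'.
have G2 : is_path z2.1.1.2 b2 b' by rewrite /z2 /= Z2.
have G3 : lets b2 = pend z2 ++ v by rewrite Pz2.
have [pi2 [z' [P2 [Z1' [Z2' [Z3' [Lb2 Ll2]]]]]]] := F z2 b2 b' G1 G2 G3.
exists (pi1 ++ (z1, mone M, edge_let (ep i), z2) :: pi2), z'.
split.
  apply: (is_path_cat P1); split; [apply: in_ce3 => //; by rewrite Z1 Ez Ei' Hs|split=> //].
rewrite lab_cat lets_cat (@lab_cons M S CA) (@lets_cons M S CA) /= Lb1 Lb2 Ll1 Ll2 mmul1l -Lb.
rewrite lets_cons Ei'; by do !split.
Qed.

Hypothesis HB : forall v, mprod (map x v) = mone N <-> accepts B v.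

Lemma sim_accepts w : accepts P w <-> accepts CA w.
Proof.
split.
  move=> [rho [qf [Hr [Fr [Lr Wr]]]]].
  have [v [Hv F]] := sim_complete Hr.
  have : accepts B v by apply/HB; rewrite Hv.
  move=> [beta [bf [Hb [Fb [Lb Wb]]]]].
  have [pi [z' [P1 [Z1 [Z2 [Z3 [Lb1 Ll1]]]]]]] :=
    F ((ainit P, ainit B, None, ord0) : CS) beta bf erefl Hb Wb.
  exists pi, z'; do !split => //.
  - by rewrite /= Z1 Z2 Z3 Fr Fb.
  - have -> : mprod (map (@edge_mon _ _ CA) pi) = lab pi by [].
    by rewrite Lb1; exact: Lb.
  - have -> : pmap id (map (@edge_let _ _ CA) pi) = lets pi by [].
    by rewrite Ll1; exact: Wr.
move=> [pi [z' [Hp [Fz [Lp Wp]]]]].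
move: Fz => /= /and3P [F1 F2 /eqP F3].
have [rho [beta [v [H1 [H2 [L1 [Lb [L2 Lv]]]]]]]] := sim_sound Hp F3.
have : accepts B v.
  exists beta, z'.1.1.2; do !split => //.
  have -> : mprod (map (@edge_mon _ _ B) beta) = lab beta by [].
  rewrite Lb; exact: Lp.
move/HB => Hv.
exists rho, z'.1.1.1; do !split => //.
- have -> : mprod (map (@edge_mon _ _ P) rho) = lab rho by [].
  by rewrite -Lv.
- have -> : pmap id (map (@edge_let _ _ P) rho) = lets rho by [].
  rewrite L1; exact: Wp.
Qed.
End Sim.

Section Proj.
Variables (M : monoidT) (X : finType) (f : X -> M).

Definition projA : automaton M X :=
  @Build_automaton M X unit
    (List.map (fun y => ((tt, f y, Some y, tt) : unit * M * option X * unit)) (enum X)) tt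
    (fun _ => true).

Lemma projA_path (p : seq (astate projA * M * option X * astate projA)) q q' :
  is_path q p q' -> lab p = mprod (map f (lets p)).
Proof.
elim: p q => [|e p IH] q //= [Hin [_ Hp]].
move/List.in_map_iff: Hin => [y [Ey _]]; subst e.
by rewrite lab_cons lets_cons /= (IH _ Hp).
Qed.

Lemma projA_accepts w : accepts projA w <-> mprod (map f w) = mone M.
Proof.
split.
  move=> [p [q' [Hp [_ [Hl Hw]]]]].
  have := projA_path Hp; rewrite /lab /lets Hw => <-; exact: Hl.
move=> H.
pose p := map (fun y => ((tt, f y, Some y, tt) : unit * M * option X * unit)) w.
exists p, tt; split; last split; [|by []|split].
- rewrite /p; clear p; elim: w {H} => [|y w IH] //=; split; last by split.
  apply/List.in_map_iff; exists y; split => //; apply: In_mem; exact: mem_enum.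
- rewrite -H /p; elim: w {H p} => [|y w IH] //=; by rewrite IH.
- rewrite /p; elim: w {H p} => [|y w IH] //=; by rewrite IH.
Qed.
End Proj.

Theorem corollary3p6 (M : monoidT) (X : finType) (x : X -> M * M) :
  finitely_generated M -> generates_MM x ->
  (FM_closed_under_intersection M <->
   exists A : automaton M X, forall w, identity_language x w <-> accepts A w).
Proof.
move=> _ [_ Hgen]; split.
  move=> Hcl.
  have H1 : in_FM M (fun w : seq X => mprod (map (fun y => (x y).1) w) = mone M).
    exists (projA (fun y => (x y).1)) => w; exact: iff_sym (projA_accepts _ w).
  have H2 : in_FM M (fun w : seq X => mprod (map (fun y => (x y).2) w) = mone M).
    exists (projA (fun y => (x y).2)) => w; exact: iff_sym (projA_accepts _ w).
  have [A HA] := Hcl X _ _ H1 H2.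
  exists A => w; rewrite -HA /identity_language prodMM_split -!map_comp.
  split; first by case.
  by case=> -> ->.
move=> [B HB] S L1 L2 [A1 HA1] [A2 HA2].
have gen : forall n : MM M, exists w, mprod (map (x : X -> MM M) w) = n := Hgen.
exists (CA gen B (prodA A1 A2)) => w.
rewrite -(@sim_accepts M (MM M) X x gen B S (prodA A1 A2) HB w) prodA_accepts HA1 HA2.
by [].
Qed.
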